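(* Let $q$ be a prime power, let $\lambda \in \mathbb{F}_{q^n}\setminus\mathbb{F}_q$, $t = [\mathbb{F}_q(\lambda):\mathbb{F}_q]$, let $\overline{S}$ be an $\mathbb{F}_{q^t}$-subspace of $\mathbb{F}_{q^n}$ of $\mathbb{F}_{q^t}$-dimension $l>0$, $b \in \mathbb{F}_{q^n}^*$ with $\mathbb{F}_{q^t}\cap b\overline{S}=\{0\}$, $0<m<t$, $k = tl+m$ with $t+1 \le k \le n$, and $S = \overline{S} \oplus b\langle 1, \lambda, \ldots, \lambda^{m-1}\rangle_{\mathbb{F}_q}$, with $Y=\langle S\rangle_{\mathbb{F}_{q^t}} = \mathbb{F}_{q^n}$ and $2m \ge t-1$. If $\mathrm{Orb}(S)$ is an $r$-FWS code with $r = 2m+t(l-1)$, then $H(\overline{S}) = \mathbb{F}_{q^t}$.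
   Context: $\mathrm{Orb}(S)=\{\alpha S:\alpha\in\mathbb{F}_{q^n}^*\}$. For an $\mathbb{F}_q$-subspace $V$ of $\mathbb{F}_{q^n}$, the stabilizer is $H(V) = \{x \in \mathbb{F}_{q^n}^* : xV = V\} \cup \{0\}$ (a subfield of $\mathbb{F}_{q^n}$). With $d(U,V)=2k-2\dim_{\mathbb{F}_q}(U\cap V)$ and $\omega_{2i}(\mathrm{Orb}(S))=|\{\alpha S: d(S,\alpha S)=2i\}|$ for $i=1,\dots,k$, $\mathrm{Orb}(S)$ is an $r$-FWS code if $\omega_{2i}=0$ for the last $r$ indices $i=k-r+1,\ldots,k$ and $\omega_{2i}\neq 0$ for all $i=1,\ldots,k-r$. $\langle S\rangle_{\mathbb{F}_{q^t}}$ denotes the $\mathbb{F}_{q^t}$-span of $S$. *)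

(* Defs.v *)
From HB Require Import structures.
From mathcomp Require Import all_boot all_order all_algebra all_field.
Set Implicit Arguments. Unset Strict Implicit. Unset Printing Implicit Defensive.
Import GRing.Theory.
Local Open Scope ring_scope.

(* Setting: F = F_q a finite field, L = F_{q^n} a finite-dimensional field
   extension of F, subspaces are F-subspaces {vspace L}. *)
Section Defs.
Variables (F : finFieldType) (L : fieldExtType F).

Definition orb_elt (a : L) (S : {vspace L}) : {vspace L} := (<[a]> * S)%VS.

Definition subdist (k : nat) (U V : {vspace L}) : nat :=
  (2 * k - 2 * \dim (U :&: V))%N.

(* omega_{2i}(Orb(S)) <> 0, i.e. the set {alpha S : d(S, alpha S) = 2i}
   (alpha ranging over L^* ) is nonempty *)
Definition omega_nonzero (S : {vspace L}) (i : nat) : Prop :=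
  exists a : L, a != 0 /\ subdist (\dim S) S (orb_elt a S) = (2 * i)%N.

Definition FWS (S : {vspace L}) (r : nat) : Prop :=
  (forall i : nat, (\dim S - r < i <= \dim S)%N -> ~ omega_nonzero S i) /\
  (forall i : nat, (1 <= i <= \dim S - r)%N -> omega_nonzero S i).

Definition stab (V : {vspace L}) : pred L :=
  fun x => (x == 0) || ((x != 0) && (orb_elt x V == V)).

End Defs.

(* Main.v *)
Require Import Defs.
From HB Require Import structures.
From mathcomp Require Import all_boot all_order all_algebra all_field.
Import GRing.Theory.
Local Open Scope ring_scope.

Theorem lemma4p8 (F : finFieldType) (L : fieldExtType F)
  (lambda b : L) (Sbar : {vspace L}) (t l m k r : nat) :
  let n := (\dim {: L})%N in
  let K := <<1%VS; lambda>>%VS in          (* F_{q^t} = F_q(lambda) *)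
  let P := <<[seq (lambda ^+ j)%R | j <- iota 0 m]>>%VS in
  let S := (Sbar + <[b]> * P)%VS in
  lambda \notin 1%VS ->
  t = \dim K ->
  (K * Sbar <= Sbar)%VS ->                  (* Sbar is an F_{q^t}-subspace *)
  \dim Sbar = (t * l)%N -> (0 < l)%N ->     (* of F_{q^t}-dimension l > 0 *)
  b != 0 ->
  (K :&: <[b]> * Sbar)%VS = 0%VS ->
  (0 < m < t)%N ->
  k = (t * l + m)%N ->
  (t + 1 <= k <= n)%N ->
  directv (Sbar + <[b]> * P) ->             (* the sum defining S is direct *)
  (K * S)%VS = fullv ->                     (* <S>_{F_{q^t}} = F_{q^n} *)
  (t - 1 <= 2 * m)%N ->
  r = (2 * m + t * (l - 1))%N ->
  FWS S r ->
  forall x : L, stab Sbar x = (x \in K).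
Proof.
move=> n K P S _ Ht KS dimS l0 b0 _ /andP[m0 mt] Hk /andP[_ kn] _ KSf _ _ _ x.
set Ka := agenv_aspace (1 + <[lambda]>)%VS.
have KKa : K = Ka by [].
have t0 : (0 < t)%N by apply: leq_ltn_trans mt.
have PK : (P <= K)%VS.
  apply/span_subvP => y /mapP [j _ ->].
  rewrite KKa; apply: rpredX; exact: memv_adjoin.
have KSle : (K * S <= Sbar + <[b]> * K)%VS.
  rewrite /S prodvDr addvS //.
  rewrite prodvCA prodvSr //.
  apply: (subv_trans (prodvSr _ PK)).
  by rewrite KKa prodv_id.
have nle : (n <= t * l + t)%N.
  rewrite /n -KSf; apply: (leq_trans (dimvS KSle)).
  apply: (leq_trans (dimv_add_leqif _ _)).
  by rewrite dimS prodvC dim_cosetv // Ht.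
have tn : (t %| n)%N.
  by rewrite Ht /n KKa field_module_dimS // subvf.
have Hn : n = (t * l.+1)%N.
  move: tn => /dvdnP [c Hc].
  have : (t * l < c * t <= t * l + t)%N.
    by rewrite -Hc nle andbT; apply: (leq_trans _ kn); rewrite Hk -addn1 leq_add2l.
  rewrite [(c * t)%N]mulnC -mulnSr ltn_pmul2l // leq_pmul2l // => /andP [h1 h2].
  rewrite Hc mulnC; congr (_ * _)%N.
  by apply/eqP; rewrite eqn_leq h2 h1.
rewrite /stab /orb_elt /=.
have [->|x0] := eqVneq x 0; first by rewrite /= mem0v.
rewrite /=.
apply/idP/idP.
- move=> /eqP xS.
  set E := agenv_aspace (Ka + <[x]>)%VS.
  have ES : (E * Sbar <= Sbar)%VS.
    apply: agenv_modl; rewrite prodvDl subv_add -KKa KS /=.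
    by rewrite xS.
  have KE : (Ka <= E)%VS by apply: subv_adjoin.
  have d1 := field_module_dimS ES.
  have d2 : (\dim E %| n)%N by rewrite /n field_module_dimS // subvf.
  have := dim_sup_field KE; rewrite -KKa -Ht => dE.
  rewrite dE dimS [(t * _)%N]mulnC dvdn_pmul2r // in d1.
  rewrite dE Hn [(t * _)%N]mulnC dvdn_pmul2r // in d2.
  have u1 : (\dim E %/ t = 1)%N.
    by apply/eqP; rewrite -dvdn1 -(dvdn_addr 1 d1) addn1.
  have EK : E = Ka :> {vspace L}.
    apply/eqP; rewrite eq_sym eqEdim KE /= dE u1 mul1n Ht; exact: leqnn.
  have : x \in E by apply: memv_adjoin.
  by rewrite EK.
- move=> xK; rewrite eqEdim; apply/andP; split.
    by apply: subv_trans KS; apply: prodvSl; rewrite -memvE.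
  by rewrite prodvC dim_cosetv.
Qed.
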